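(* In the standing setting, let $(A,B,R,\sigma)$ be a normalized context and $(g,f)\in\mathcal{FC}$ with $g^{\uparrow}\ne f_\bot$ and $f^{\downarrow}\ne g_\bot$. Then $\langle f^{\downarrow},f\rangle$ and $\langle g,g^{\uparrow}\rangle$ belong to $\mathcal M$ and $\langle f^{\downarrow},f\rangle\preceq\langle g,g^{\uparrow}\rangle$ (equivalently, $f^{\downarrow}\preceq_2 g$ pointwise).
   Context: Adjoint triple: for posets $(P_1,\le_1),(P_2,\le_2),(P_3,\le_3)$, maps $\&\colon P_1\times P_2\to P_3$, $\swarrow\colon P_3\times P_2\to P_1$, $\nwarrow\colon P_3\times P_1\to P_2$ with $x\le_1 z\swarrow y \iff x\,\&\,y\le_3 z \iff y\le_2 z\nwarrow x$ for all $x,y,z$. For lower-bounded posets, $\&$ has zero-divisors if there are $x\ne\bot_1$, $y\neq\bot_2$ with $x\,\&\,y=\bot_3$. Standing setting: $(L_1,\preceq_1,\bot_1,\top_1)$ and $(L_2,\preceq_2,\bot_2,\top_2)$ are complete lattices and $(P,\le,\bot,\top)$ is a bounded poset. A multi-adjoint frame consists of adjoint triples $(\&_i,\swarrow^i,\nwarrow_i)$, $i=1,\dots,n$, with respect to $L_1,L_2,P$; a property-oriented frame consists of adjoint triples $(\&^p_j,\swarrow_p^j,\nwarrow^p_j)$, $j=1,\dots,m$, with respect to $P,L_2,L_1$; an object-oriented frame consists of adjoint triples $(\&^o_k,\swarrow_o^k,\nwarrow^o_k)$, $k=1,\dots,s$, with respect to $L_1,P,L_2$. All conjunctors $\&_i,\&^p_j,\&^o_k$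 have no zero-divisors. A context $(A,B,R,\sigma)$ consists of non-empty sets $A,B$, $R\colon A\times B\to P$, and maps $\sigma,\sigma_p,\sigma_o$ from $A\times B$ to the index sets of the three frames. It is normalized if every $a\in A$ has $b_1,b_2\in B$ with $R(a,b_1)\ne\bot$, $R(a,b_2)=\bot$, and every $b\in B$ has $a_1,a_2\in A$ with $R(a_1,b)\neq\bot$, $R(a_2,b)=\bot$. Concept-forming operators: $g^{\uparrow}(a)=\inf\{R(a,b)\swarrow^{\sigma(a,b)}g(b)\mid b\in B\}$ for $g\in L_2^B$ and $f^{\downarrow}(b)=\inf\{R(a,b)\nwarrow_{\sigma(a,b)}f(a)\mid a\in A\}$ for $f\in L_1^A$. Multi-adjoint concept lattice $\mathcal M=\{\langle g,f\rangle\mid g\in L_2^B,f\in L_1^A,\ g^{\uparrow}=f,\ f^{\downarrow}=g\}$, ordered by $\langle g_1,f_1\rangle\preceq\langle g_2,f_2\rangle$ iff $g_1\preceq_2 g_2$ pointwise. Fuzzy necessity operators: $g^{\uparrow_N}(a)=\inf\{g(b)\swarrow_o^{\sigma_o(a,b)}R(a,b)\mid b\in B\}$ and $f^{\downarrow^N}(b)=\inf\{f(a)\nwarrow^p_{\sigma_p(a,b)}R(a,b)\mid a\in A\}$. $\mathcal F_N=\{(g,f)\mid g\in L_2^B,\ f\in L_1^A,\ g^{\uparrow_N}=f,\ f^{\downarrow^N}=g\}$. For $X\subseteq B$, $\chi_X\in L_2^B$ takes value $\top_2$ on $X$ and $\bot_2$ elsewhere; for $Y\subseteq A$, $\chi_Y\in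 L_1^A$ takes value $\top_1$ on $Y$ and $\bot_1$ elsewhere. $\mathcal{FC}=\{(\chi_X,\chi_Y)\in\mathcal F_N\mid \varnothing\ne X\subsetneq B,\ \varnothing\neq Y\subsetneq A\}$. $g_\bot\in L_2^B$, $f_\bot\in L_1^A$ are the constant maps with values $\bot_2,\bot_1$. *)

(* Defs.v *)
From mathcomp Require Import ssreflect ssrbool ssrnat fintype.
Set Implicit Arguments.
Unset Strict Implicit.

Record BPoset := {
  bp_car :> Type;
  bp_le : bp_car -> bp_car -> Prop;
  bp_refl : forall x, bp_le x x;
  bp_trans : forall x y z, bp_le x y -> bp_le y z -> bp_le x z;
  bp_antisym : forall x y, bp_le x y -> bp_le y x -> x = y;
  bp_bot : bp_car;
  bp_top : bp_car;
  bp_bot_le : forall x, bp_le bp_bot x;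
  bp_le_top : forall x, bp_le x bp_top
}.

Record CLattice := {
  cl_car :> Type;
  cl_le : cl_car -> cl_car -> Prop;
  cl_refl : forall x, cl_le x x;
  cl_trans : forall x y z, cl_le x y -> cl_le y z -> cl_le x z;
  cl_antisym : forall x y, cl_le x y -> cl_le y x -> x = y;
  cl_inf : (cl_car -> Prop) -> cl_car;
  cl_inf_lb : forall (S : cl_car -> Prop) x, S x -> cl_le (cl_inf S) x;
  cl_inf_glb : forall (S : cl_car -> Prop) y,
      (forall x, S x -> cl_le y x) -> cl_le y (cl_inf S)
}.

Definition cl_bot (L : CLattice) : L := cl_inf (fun _ => True).
Definition cl_top (L : CLattice) : L := cl_inf (fun _ => False).

Definition adjoint_triple (P1 P2 P3 : Type)
  (le1 : P1 -> P1 -> Prop) (le2 : P2 -> P2 -> Prop) (le3 : P3 -> P3 -> Prop)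
  (conj : P1 -> P2 -> P3) (sw : P3 -> P2 -> P1) (nw : P3 -> P1 -> P2) : Prop :=
  forall x y z,
    (le1 x (sw z y) <-> le3 (conj x y) z) /\ (le3 (conj x y) z <-> le2 y (nw z x)).

Definition no_zero_divisors (P1 P2 P3 : Type) (bot1 : P1) (bot2 : P2) (bot3 : P3)
  (conj : P1 -> P2 -> P3) : Prop :=
  forall x y, x <> bot1 -> y <> bot2 -> conj x y <> bot3.

Definition normalized (P : BPoset) (A B : Type) (R : A -> B -> P) : Prop :=
  (forall a, exists b1 b2, R a b1 <> bp_bot P /\ R a b2 = bp_bot P) /\
  (forall b, exists a1 a2, R a1 b <> bp_bot P /\ R a2 b = bp_bot P).

Definition up (L1 L2 : CLattice) (P : BPoset) (n : nat) (A B : Type)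
  (R : A -> B -> P) (sigma : A -> B -> 'I_n) (sw : 'I_n -> P -> L2 -> L1)
  (g : B -> L2) : A -> L1 :=
  fun a => cl_inf (fun x => exists b, x = sw (sigma a b) (R a b) (g b)).

Definition down (L1 L2 : CLattice) (P : BPoset) (n : nat) (A B : Type)
  (R : A -> B -> P) (sigma : A -> B -> 'I_n) (nw : 'I_n -> P -> L1 -> L2)
  (f : A -> L1) : B -> L2 :=
  fun b => cl_inf (fun y => exists a, y = nw (sigma a b) (R a b) (f a)).

Definition upN (L1 L2 : CLattice) (P : BPoset) (s : nat) (A B : Type)
  (R : A -> B -> P) (sigma_o : A -> B -> 'I_s) (sw_o : 'I_s -> L2 -> P -> L1)
  (g : B -> L2) : A -> L1 :=
  fun a => cl_inf (fun x => exists b, x = sw_o (sigma_o a b) (g b) (R a b)).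

Definition downN (L1 L2 : CLattice) (P : BPoset) (m : nat) (A B : Type)
  (R : A -> B -> P) (sigma_p : A -> B -> 'I_m) (nw_p : 'I_m -> L1 -> P -> L2)
  (f : A -> L1) : B -> L2 :=
  fun b => cl_inf (fun y => exists a, y = nw_p (sigma_p a b) (f a) (R a b)).

Definition chi (L : CLattice) (T : Type) (X : T -> bool) : T -> L :=
  fun t => if X t then cl_top L else cl_bot L.

Definition in_M (L1 L2 : CLattice) (P : BPoset) (n : nat) (A B : Type)
  (R : A -> B -> P) (sigma : A -> B -> 'I_n)
  (sw : 'I_n -> P -> L2 -> L1) (nw : 'I_n -> P -> L1 -> L2)
  (g : B -> L2) (f : A -> L1) : Prop :=
  up R sigma sw g = f /\ down R sigma nw f = g.

Definition M_le (L1 L2 : CLattice) (A B : Type)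
  (g1 : B -> L2) (f1 : A -> L1) (g2 : B -> L2) (f2 : A -> L1) : Prop :=
  forall b, cl_le (g1 b) (g2 b).

(* Main.v *)
Require Import Defs.
From mathcomp Require Import ssreflect ssrbool ssrnat fintype.
From Stdlib Require Import Classical FunctionalExtensionality.

Lemma cbot_le (L : CLattice) (x : L) : cl_le (cl_bot L) x.
Proof. exact (@cl_inf_lb L (fun _ : L => True) x I). Qed.
Lemma cle_top (L : CLattice) (x : L) : cl_le x (cl_top L).
Proof. apply cl_inf_glb; intros _ []. Qed.
Lemma cle_bot (L : CLattice) (x : L) : cl_le x (cl_bot L) -> x = cl_bot L.
Proof. intro H; apply cl_antisym; [exact H | apply cbot_le]. Qed.
Lemma ble_bot (P : BPoset) (x : P) : bp_le x (bp_bot P) -> x = bp_bot P.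
Proof. intro H; apply bp_antisym; [exact H | apply bp_bot_le]. Qed.

Lemma ex_not_bot (L : CLattice) (T : Type) (h : T -> L) :
  h <> (fun _ => cl_bot L) -> exists t, h t <> cl_bot L.
Proof.
intro H; apply NNPP; intro H'; apply H; apply functional_extensionality.
intro t; apply NNPP; intro Ht; apply H'; exists t; exact Ht.
Qed.

Lemma top_ne_bot (L : CLattice) (T : Type) (h : T -> L) :
  h <> (fun _ => cl_bot L) -> cl_top L <> cl_bot L.
Proof.
intros H E; apply H; apply functional_extensionality; intro t.
apply cle_bot; rewrite -E; apply cle_top.
Qed.

Theorem mainTheorem15
  (L1 L2 : CLattice) (P : BPoset) (n m s : nat)
  (* multi-adjoint frame: adjoint triples w.r.t. L1, L2, P *)
  (conj : 'I_n -> L1 -> L2 -> P) (sw : 'I_n -> P -> L2 -> L1) (nw : 'I_n -> P -> L1 -> L2)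
  (Hadj : forall i, adjoint_triple (@cl_le L1) (@cl_le L2) (@bp_le P) (conj i) (sw i) (nw i))
  (Hnz : forall i, no_zero_divisors (cl_bot L1) (cl_bot L2) (bp_bot P) (conj i))
  (* property-oriented frame: adjoint triples w.r.t. P, L2, L1 *)
  (conj_p : 'I_m -> P -> L2 -> L1) (sw_p : 'I_m -> L1 -> L2 -> P) (nw_p : 'I_m -> L1 -> P -> L2)
  (Hadj_p : forall j, adjoint_triple (@bp_le P) (@cl_le L2) (@cl_le L1) (conj_p j) (sw_p j) (nw_p j))
  (Hnz_p : forall j, no_zero_divisors (bp_bot P) (cl_bot L2) (cl_bot L1) (conj_p j))
  (* object-oriented frame: adjoint triples w.r.t. L1, P, L2 *)
  (conj_o : 'I_s -> L1 -> P -> L2) (sw_o : 'I_s -> L2 -> P -> L1) (nw_o : 'I_s -> L2 -> L1 -> P)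
  (Hadj_o : forall k, adjoint_triple (@cl_le L1) (@bp_le P) (@cl_le L2) (conj_o k) (sw_o k) (nw_o k))
  (Hnz_o : forall k, no_zero_divisors (cl_bot L1) (bp_bot P) (cl_bot L2) (conj_o k))
  (* context *)
  (A B : Type) (HA : inhabited A) (HB : inhabited B) (R : A -> B -> P)
  (sigma : A -> B -> 'I_n) (sigma_p : A -> B -> 'I_m) (sigma_o : A -> B -> 'I_s)
  (Hnorm : normalized R)
  (* (g, f) in FC *)
  (X : B -> bool) (Y : A -> bool)
  (HXne : exists b, X b) (HXpr : exists b, ~~ X b)
  (HYne : exists a, Y a) (HYpr : exists a, ~~ Y a)
  (g : B -> L2) (f : A -> L1)
  (Hg : g = chi L2 X) (Hf : f = chi L1 Y)
  (HgN : upN R sigma_o sw_o g = f) (HfN : downN R sigma_p nw_p f = g)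
  (* extra hypotheses *)
  (Hup : up R sigma sw g <> (fun _ => cl_bot L1))
  (Hdown : down R sigma nw f <> (fun _ => cl_bot L2)) :
  in_M R sigma sw nw (down R sigma nw f) f /\
  in_M R sigma sw nw g (up R sigma sw g) /\
  M_le (down R sigma nw f) f g (up R sigma sw g).
Proof.
have T1 := @top_ne_bot _ _ _ Hup.
have T2 := @top_ne_bot _ _ _ Hdown.
have fY : forall a, Y a -> f a = cl_top L1 by move=> a Ha; rewrite Hf /chi Ha.
have fnY : forall a, ~~ Y a -> f a = cl_bot L1 by move=> a Ha; rewrite Hf /chi (negbTE Ha).
have gX : forall b, X b -> g b = cl_top L2 by move=> b Hb; rewrite Hg /chi Hb.
have gnX : forall b, ~~ X b -> g b = cl_bot L2 by move=> b Hb; rewrite Hg /chi (negbTE Hb).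
have F1 : forall a b, Y a -> ~~ X b -> R a b = bp_bot P.
  move=> a b Ha Hb.
  have H1 : cl_le (f a) (sw_o (sigma_o a b) (g b) (R a b)).
    rewrite -HgN; apply cl_inf_lb; exists b; reflexivity.
  rewrite fY // gnX // in H1.
  apply (proj1 (proj1 (Hadj_o _ _ _ _))) in H1.
  apply cle_bot in H1.
  apply NNPP => Hne; exact: (Hnz_o _ _ _ T1 Hne H1).
have F2 : forall a b, ~~ Y a -> X b -> R a b = bp_bot P.
  move=> a b Ha Hb.
  have H1 : cl_le (g b) (nw_p (sigma_p a b) (f a) (R a b)).
    rewrite -HfN; apply cl_inf_lb; exists a; reflexivity.
  rewrite fnY // gX // in H1.
  apply (proj2 (proj2 (Hadj_p _ _ _ _))) in H1.
  apply cle_bot in H1.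
  apply NNPP => Hne; exact: (Hnz_p _ _ _ Hne T2 H1).
have F3 : forall b, ~~ X b -> down R sigma nw f b = cl_bot L2.
  move=> b Hb; case: HYne => a Ha.
  have H1 : cl_le (down R sigma nw f b) (nw (sigma a b) (R a b) (f a)).
    apply cl_inf_lb; exists a; reflexivity.
  apply (proj2 (proj2 (Hadj _ _ _ _))) in H1.
  rewrite F1 // fY // in H1.
  apply ble_bot in H1.
  apply NNPP => Hne; exact: (Hnz _ _ _ T1 Hne H1).
have F4 : forall a, ~~ Y a -> up R sigma sw g a = cl_bot L1.
  move=> a Ha; case: HXne => b Hb.
  have H1 : cl_le (up R sigma sw g a) (sw (sigma a b) (R a b) (g b)).
    apply cl_inf_lb; exists b; reflexivity.
  apply (proj1 (proj1 (Hadj _ _ _ _))) in H1.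
  rewrite F2 // gX // in H1.
  apply ble_bot in H1.
  apply NNPP => Hne; exact: (Hnz _ _ _ Hne T2 H1).
have G1 : forall (h : A -> L1) a, cl_le (h a) (up R sigma sw (down R sigma nw h) a).
  move=> h a; apply cl_inf_glb => x [b ->].
  apply (proj2 (proj1 (Hadj _ _ _ _))).
  apply (proj2 (proj2 (Hadj _ _ _ _))).
  apply cl_inf_lb; exists a; reflexivity.
have G2 : forall (h : B -> L2) b, cl_le (h b) (down R sigma nw (up R sigma sw h) b).
  move=> h b; apply cl_inf_glb => x [a ->].
  apply (proj1 (proj2 (Hadj _ _ _ _))).
  apply (proj1 (proj1 (Hadj _ _ _ _))).
  apply cl_inf_lb; exists b; reflexivity.
have F6 : forall a, ~~ Y a -> up R sigma sw (down R sigma nw f) a = cl_bot L1.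
  move=> a Ha; case: (@ex_not_bot _ _ _ Hdown) => b0 Hb0.
  have Xb0 : X b0.
    case E: (X b0) => //; exfalso; apply Hb0; apply F3; rewrite E //.
  have H1 : cl_le (up R sigma sw (down R sigma nw f) a)
                  (sw (sigma a b0) (R a b0) (down R sigma nw f b0)).
    apply cl_inf_lb; exists b0; reflexivity.
  apply (proj1 (proj1 (Hadj _ _ _ _))) in H1.
  rewrite F2 // in H1.
  apply ble_bot in H1.
  apply NNPP => Hne; exact: (Hnz _ _ _ Hne Hb0 H1).
have F7 : forall b, ~~ X b -> down R sigma nw (up R sigma sw g) b = cl_bot L2.
  move=> b Hb; case: (@ex_not_bot _ _ _ Hup) => a0 Ha0.
  have Ya0 : Y a0.
    case E: (Y a0) => //; exfalso; apply Ha0; apply F4; rewrite E //.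
  have H1 : cl_le (down R sigma nw (up R sigma sw g) b)
                  (nw (sigma a0 b) (R a0 b) (up R sigma sw g a0)).
    apply cl_inf_lb; exists a0; reflexivity.
  apply (proj2 (proj2 (Hadj _ _ _ _))) in H1.
  rewrite F1 // in H1.
  apply ble_bot in H1.
  apply NNPP => Hne; exact: (Hnz _ _ _ Ha0 Hne H1).
split; [split|split; [split|]] => //.
- apply functional_extensionality => a.
  case E: (Y a).
  + rewrite fY //; apply cl_antisym; [apply cle_top|rewrite -(fY a E); apply G1].
  + rewrite fnY ?E // F6 // E //.
- apply functional_extensionality => b.
  case E: (X b).
  + rewrite gX //; apply cl_antisym; [apply cle_top|rewrite -(gX b E); apply G2].
  + rewrite gnX ?E // F7 // E //.
- move=> b; case E: (X b).
  + rewrite gX //; apply cle_top.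
  + rewrite F3 ?E //; apply cbot_le.
Qed.
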